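(* Assume (A1) and (A4). Consider Algorithm 2 with parameter choice (P1), any stage $s$ and any inner iteration $k$. Then, with expectation taken over the samples $i_k,j_k$ (conditionally on the past), $$\mathbb E\|x^{k+1}-x^*\|_{G_k}^2\le\mathbb E\|x^k-x^*\|_{G_k}^2-2\eta_s\mathbb E\big(F(x^{k+1})-F(x^* )\big)-2\eta_s\mathbb E\langle\nabla\hat F_{i_k}(x^k)-\nabla F(x^k),x^{k+1}-x^*\rangle+2\eta_s\mathbb E\langle A^T\lambda^{k+1},x^*-x^{k+1}\rangle.$$
   Context: Standing setup. Let $n,m,p,q,r,l\ge1$. For $j\in\{1,\dots,m\}$ let $g_j:\mathbb R^q\to\mathbb R^r$ be continuously differentiable with Jacobian $\partial g_j(x)\in\mathbb R^{r\times q}$; for $i\in\{1,\dots,n\}$ let $f_i:\mathbb R^r\to\mathbb R$ be continuously differentiable. Set $g(x)=\frac1m\sum_{j=1}^m g_j(x)$, $F_i(x)=f_i(g(x))$, $F(x)=\frac1n\sum_{i=1}^nF_i(x)$. Let $R:\mathbb R^l\to\mathbb R$ be closed convex, $A\in\mathbb R^{p\times q}$, $B\in\mathbb R^{p\times l}$; the problem is $\min_{x,\omega}F(x)+R(\omega)$ s.t. $Ax+B\omega=0$, with optimal primal–dual solution $(x^*,\omega^*,\lambda^* )$. $\|\cdot\|$ is the Euclidean norm; for positive definite $H$, $\|x\|_H^2=x^THx$. Assumptions. (A1) Each $F_i$ is convex, $R$ is convex, an optimal primal–dual solution exists, and all $x$-points arising lie in a bounded set. (A4) There is $L_F>0$ with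 $\|(\partial g_j(x))^T\nabla f_i(g(x))-(\partial g_j(y))^T\nabla f_i(g(y))\|\le L_F\|x-y\|$ for all $i,j,x,y$. Algorithm 2 (inputs: integers $S,K\ge1$, $\rho>0$, stepsizes $\eta_s>0$, matrices $G_k$ per stage as below; initial $\tilde x^0=\hat x^0$, $\hat\omega^0$, $\hat\lambda^0$, $\hat G^0=I$). For $s=1,\dots,S$: set $\tilde x=\tilde x^{s-1}$, $x^0=\hat x^{s-1}$, $\omega^0=\hat\omega^{s-1}$, $\lambda^0=\hat\lambda^{s-1}$, $G_0=\hat G^{s-1}$; compute $g(\tilde x)$, $\nabla F(\tilde x)$. For $k=0,\dots,K-1$: (a) $\omega^{k+1}\in\arg\min_\omega R(\omega)+\langle\lambda^k,B\omega\rangle+\frac\rho2\|Ax^k+B\omega\|^2$; (b) compute $g(x^k)$ exactly; (c) draw $i_k$ uniform on $\{1,\dots,n\}$ and $j_k$ uniform on $\{1,\dots,m\}$, independently, and set $\nabla\hat F_{i_k}(x^k)=(\partial g_{j_k}(x^k))^T\nabla f_{i_k}(g(x^k))-(\partial g_{j_k}(\tilde x))^T\nabla f_{i_k}(g(\tilde x))+\nabla F(\tilde x)$; (d) $x^{k+1}=\arg\min_x\langle\nabla\hat F_{i_k}(x^k),x-x^k\rangle+\langle\lambda^k,Ax\rangle+\frac\rho2\|Ax+B\omega^{k+1}\|^2+\frac1{2\eta_s}\|x-x^k\|_{G_k}^2$; (e) $\lambda^{k+1}=\lambda^k+\rho(Ax^{k+1}+B\omega^{k+1})$. End of stage $s$: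 $\tilde x^s=\frac1K\sum_{k=1}^Kx^k$, $\tilde\omega^s=\frac1K\sum_{k=1}^K\omega^k$, $\hat x^s=x^K$, $\hat\omega^s=\omega^K$, $\hat\lambda^s=\lambda^K$, $\hat G^s=G_K$. Parameter choice (P1): $\eta_s=\frac1{(s+1)L_F}$, and in stage $s$ the matrices $G_0,\dots,G_K$ are scalar multiples of the identity with $\frac1sI=G_0\succeq G_1\succeq\dots\succeq G_{K-1}=G_K=\frac1{s+1}I$. *)

(* Defs.v *)
From Stdlib Require Import Reals.
From mathcomp Require Import ssreflect ssrfun ssrbool eqtype ssrnat seq fintype bigop.
Set Implicit Arguments. Unset Strict Implicit.
Open Scope R_scope.

Definition vec (n : nat) := 'I_n -> R.
Definition mat (m n : nat) := 'I_m -> 'I_n -> R.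

Definition rsum (n : nat) (F : 'I_n -> R) : R := \big[Rplus/0]_(i < n) F i.

Definition vadd n (u v : vec n) : vec n := fun a => u a + v a.
Definition vsub n (u v : vec n) : vec n := fun a => u a - v a.
Definition vscal n (c : R) (u : vec n) : vec n := fun a => c * u a.
Definition vsum (I n : nat) (F : 'I_I -> vec n) : vec n := fun a => rsum (fun i => F i a).

Definition dot n (u v : vec n) : R := rsum (fun a => u a * v a).
Definition nsq n (u : vec n) : R := dot u u.
Definition vnorm n (u : vec n) : R := sqrt (nsq u).
(* ||u||_G^2 for G = c * I (all matrices G_k of (P1) are scalar multiples of I) *)
Definition gnorm2 n (c : R) (u : vec n) : R := c * nsq u.

Definition mv m n (M : mat m n) (x : vec n) : vec m := fun a => rsum (fun b => M a b * x b).
Definition tmv m n (M : mat m n) (y : vec m) : vec n := fun b => rsum (fun a => M a b * y a).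

Definition has_jacobian a b (f : vec a -> vec b) (J : vec a -> mat b a) : Prop :=
  forall x eps, 0 < eps -> exists delta, 0 < delta /\
    forall y, vnorm (vsub y x) < delta ->
      vnorm (vsub (vsub (f y) (f x)) (mv (J x) (vsub y x))) <= eps * vnorm (vsub y x).
Definition mat_continuous a b (J : vec a -> mat b a) : Prop :=
  forall x eps, 0 < eps -> exists delta, 0 < delta /\
    forall y, vnorm (vsub y x) < delta -> forall i j, Rabs (J y i j - J x i j) < eps.
Definition C1_map a b (f : vec a -> vec b) (J : vec a -> mat b a) : Prop :=
  has_jacobian f J /\ mat_continuous J.

Definition has_gradient a (f : vec a -> R) (gr : vec a -> vec a) : Prop :=
  forall x eps, 0 < eps -> exists delta, 0 < delta /\
    forall y, vnorm (vsub y x) < delta ->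
      Rabs (f y - f x - dot (gr x) (vsub y x)) <= eps * vnorm (vsub y x).
Definition vec_continuous a b (h : vec a -> vec b) : Prop :=
  forall x eps, 0 < eps -> exists delta, 0 < delta /\
    forall y, vnorm (vsub y x) < delta -> vnorm (vsub (h y) (h x)) < eps.
Definition C1_scalar a (f : vec a -> R) (gr : vec a -> vec a) : Prop :=
  has_gradient f gr /\ vec_continuous gr.

Definition convex a (h : vec a -> R) : Prop :=
  forall x y t, 0 <= t <= 1 ->
    h (vadd (vscal t x) (vscal (1 - t) y)) <= t * h x + (1 - t) * h y.
(* closed = lower semicontinuous (for a real-valued function) *)
Definition lsc a (h : vec a -> R) : Prop :=
  forall x eps, 0 < eps -> exists delta, 0 < delta /\
    forall y, vnorm (vsub y x) < delta -> h x - eps < h y.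

Section Problem.
Variables (n m q r : nat).
Variables (g : 'I_m -> vec q -> vec r) (Jg : 'I_m -> vec q -> mat r q)
          (f : 'I_n -> vec r -> R) (gf : 'I_n -> vec r -> vec r).

Definition gbar (x : vec q) : vec r := vscal (/ INR m) (vsum (fun j => g j x)).
Definition Jbar (x : vec q) : mat r q := fun a b => / INR m * rsum (fun j => Jg j x a b).
Definition Fi (i : 'I_n) (x : vec q) : R := f i (gbar x).
Definition Fobj (x : vec q) : R := / INR n * rsum (fun i => Fi i x).
Definition gradF (x : vec q) : vec q :=
  vscal (/ INR n) (vsum (fun i => tmv (Jbar x) (gf i (gbar x)))).
(* the variance-reduced estimator of step (c) *)
Definition sgrad (i : 'I_n) (j : 'I_m) (x xt : vec q) : vec q :=
  vadd (vsub (tmv (Jg j x) (gf i (gbar x))) (tmv (Jg j xt) (gf i (gbar xt)))) (gradF xt).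
End Problem.

Definition Lagr n m p q r l (g : 'I_m -> vec q -> vec r) (f : 'I_n -> vec r -> R)
  (Rw : vec l -> R) (A : mat p q) (B : mat p l) (x : vec q) (w : vec l) (lam : vec p) : R :=
  Fobj g f x + Rw w + dot lam (vadd (mv A x) (mv B w)).
Definition opt_primal_dual n m p q r l (g : 'I_m -> vec q -> vec r) (f : 'I_n -> vec r -> R)
  (Rw : vec l -> R) (A : mat p q) (B : mat p l) (xs : vec q) (ws : vec l) (ls : vec p) : Prop :=
  forall x w lam,
    Lagr g f Rw A B xs ws lam <= Lagr g f Rw A B xs ws ls /\
    Lagr g f Rw A B xs ws ls <= Lagr g f Rw A B x w ls.

(* a sample path: xi s k = (i_k, j_k) drawn at inner iteration k of stage s *)
Definition spath (n m : nat) := nat -> nat -> ('I_n * 'I_m)%type.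
Definition upd n m (xi : spath n m) (s k : nat) (ij : 'I_n * 'I_m) : spath n m :=
  fun s' k' => if (s' == s) && (k' == k) then ij else xi s' k'.

(* X xi s k = x^k of stage s, W = omega^k, Lam = lambda^k, Xt xi s = tilde x^s,
   along sample path xi; c s k is the scalar with G_k = c s k * I in stage s. *)
Definition IsRun n m p q r l (g : 'I_m -> vec q -> vec r) (Jg : 'I_m -> vec q -> mat r q)
  (f : 'I_n -> vec r -> R) (gf : 'I_n -> vec r -> vec r) (Rw : vec l -> R)
  (A : mat p q) (B : mat p l) (S K : nat) (rho : R) (eta : nat -> R) (c : nat -> nat -> R)
  (xhat0 : vec q) (what0 : vec l) (lhat0 : vec p)
  (X : spath n m -> nat -> nat -> vec q) (W : spath n m -> nat -> nat -> vec l)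
  (Lam : spath n m -> nat -> nat -> vec p) (Xt : spath n m -> nat -> vec q) : Prop :=
  forall xi : spath n m,
    Xt xi 0%N = xhat0 /\
    forall s, (1 <= s <= S)%N ->
      X xi s 0%N = (if s == 1%N then xhat0 else X xi s.-1 K) /\
      W xi s 0%N = (if s == 1%N then what0 else W xi s.-1 K) /\
      Lam xi s 0%N = (if s == 1%N then lhat0 else Lam xi s.-1 K) /\
      (forall k, (k < K)%N ->
        let xk := X xi s k in let lk := Lam xi s k in
        let w1 := W xi s k.+1 in let x1 := X xi s k.+1 in
        (forall w, Rw w1 + dot lk (mv B w1) + rho / 2 * nsq (vadd (mv A xk) (mv B w1))
                   <= Rw w + dot lk (mv B w) + rho / 2 * nsq (vadd (mv A xk) (mv B w))) /\
        (* (b)-(d) x-update with the estimator built from (i_k, j_k) = xi s k *)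
        (let v := sgrad g Jg gf (xi s k).1 (xi s k).2 xk (Xt xi s.-1) in
         forall x, dot v (vsub x1 xk) + dot lk (mv A x1) + rho / 2 * nsq (vadd (mv A x1) (mv B w1))
                     + / (2 * eta s) * gnorm2 (c s k) (vsub x1 xk)
                   <= dot v (vsub x xk) + dot lk (mv A x) + rho / 2 * nsq (vadd (mv A x) (mv B w1))
                     + / (2 * eta s) * gnorm2 (c s k) (vsub x xk)) /\
        Lam xi s k.+1 = vadd lk (vscal rho (vadd (mv A x1) (mv B w1)))) /\
      Xt xi s = vscal (/ INR K) (vsum (fun k : 'I_K => X xi s k.+1)).

(* Main.v *)
Require Import Defs.
From HB Require Import structures.
From Stdlib Require Import Reals Lra Lia Psatz FunctionalExtensionality.
From mathcomp Require Import ssreflect ssrfun ssrbool eqtype ssrnat seq fintype bigop.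
From mathcomp Require Import zify.
Open Scope R_scope.
Set Implicit Arguments. Unset Strict Implicit.
Set Warnings "-notation-overridden,-redundant-canonical-projection".

Lemma Rplus_assoc' : associative Rplus.
Proof. move=> a b c; ring. Qed.
HB.instance Definition _ := Monoid.isComLaw.Build R 0%R Rplus Rplus_assoc' Rplus_comm Rplus_0_l.

Lemma rsumD n (F G : 'I_n -> R) : rsum (fun i => F i + G i) = rsum F + rsum G.
Proof. by rewrite /rsum big_split. Qed.
Lemma rsum_exch n m (F : 'I_n -> 'I_m -> R) :
  rsum (fun i => rsum (fun j => F i j)) = rsum (fun j => rsum (fun i => F i j)).
Proof. rewrite /rsum. exact: exchange_big. Qed.
Lemma rsumZ n c (F : 'I_n -> R) : rsum (fun i => c * F i) = c * rsum F.
Proof.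
rewrite /rsum; apply: (big_ind2 (fun a b => a = c * b)); first ring.
- by move=> a b a' b' -> ->; ring.
- by [].
Qed.
Lemma rsumB n (F G : 'I_n -> R) : rsum (fun i => F i - G i) = rsum F - rsum G.
Proof.
have -> : rsum (fun i => F i - G i) = rsum (fun i => F i + (-1) * G i).
  by rewrite /rsum; apply: eq_bigr => i _; ring.
rewrite rsumD rsumZ; ring.
Qed.
Lemma rsum_ext n (F G : 'I_n -> R) : (forall i, F i = G i) -> rsum F = rsum G.
Proof. move=> H; rewrite /rsum; apply: eq_bigr => i _; exact: H. Qed.
Lemma rsum_le n (F G : 'I_n -> R) : (forall i, F i <= G i) -> rsum F <= rsum G.
Proof.
move=> H; rewrite /rsum; apply: (big_ind2 (fun a b => a <= b)); first lra.
- move=> *; lra.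
- by move=> i _; apply: H.
Qed.
Lemma rsum_const n a : rsum (fun _ : 'I_n => a) = INR n * a.
Proof.
rewrite /rsum big_const_ord; elim: n => [|n IH]; first (simpl; ring).
change (iter n.+1 (Rplus a) 0) with (a + iter n (Rplus a) 0).
rewrite IH S_INR; ring.
Qed.
Lemma rsum_abs n (F : 'I_n -> R) : Rabs (rsum F) <= rsum (fun i => Rabs (F i)).
Proof.
rewrite /rsum; apply: (big_ind2 (fun a b => Rabs a <= b)).
- rewrite Rabs_R0; lra.
- move=> a b a' b' H1 H2. apply: Rle_trans (Rabs_triang _ _) _. lra.
- move=> i _; lra.
Qed.
Lemma rsum_ge0 n (F : 'I_n -> R) : (forall i, 0 <= F i) -> 0 <= rsum F.
Proof.
move=> H; rewrite -(Rmult_0_r (INR n)) -rsum_const; exact: rsum_le.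
Qed.

Ltac rfold := rewrite -?rsumZ -?rsumB -?rsumD.

Lemma nsq_ge0 n (u : vec n) : 0 <= nsq u.
Proof. apply: rsum_ge0 => i; nra. Qed.
Lemma vnorm_ge0 n (u : vec n) : 0 <= vnorm u.
Proof. exact: sqrt_pos. Qed.
Lemma vnorm_sq n (u : vec n) : vnorm u * vnorm u = nsq u.
Proof. rewrite /vnorm sqrt_sqrt //; exact: nsq_ge0. Qed.

Lemma young n (u v : vec n) a : 0 < a -> 2 * dot u v <= a * nsq u + / a * nsq v.
Proof.
move=> Ha. rewrite /nsq /dot; rfold. apply: rsum_le => i.
have : 0 <= (a * u i - v i) * (a * u i - v i) by exact: Rle_0_sqr.
move=> H. have Hi : a * / a = 1 by field; lra.
have Hv : 0 < / a by apply: Rinv_0_lt_compat.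
apply: (Rmult_le_reg_l a) => //.
have -> : a * (a * (u i * u i) + / a * (v i * v i)) = a * a * (u i * u i) + (a * / a) * (v i * v i) by ring.
rewrite Hi; nra.
Qed.

Lemma cs n (u v : vec n) : dot u v <= vnorm u * vnorm v.
Proof.
case: (Req_dec (vnorm u) 0) => Hu.
- have Hn : nsq u = 0 by rewrite -vnorm_sq Hu; ring.
  have H : forall e, 0 < e -> 2 * dot u v <= / e * nsq v.
    move=> e He. have := young u v He. rewrite Hn; lra.
  rewrite Hu Rmult_0_l.
  case: (Rle_lt_dec (dot u v) 0) => // Hd.
  have Hp := nsq_ge0 v.
  pose e := (nsq v + 1) / dot u v.
  have He : 0 < e by apply: Rdiv_lt_0_compat; lra.
  have := H e He. rewrite /e Rinv_div.
  have -> : dot u v / (nsq v + 1) * nsq v = dot u v * (nsq v / (nsq v + 1)) by field; lra.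
  have : nsq v / (nsq v + 1) < 1.
    apply: (Rmult_lt_reg_r (nsq v + 1)); first lra.
    rewrite /Rdiv Rmult_assoc Rinv_l; lra.
  nra.
- case: (Req_dec (vnorm v) 0) => Hv.
  + have Hn : nsq v = 0 by rewrite -vnorm_sq Hv; ring.
    have H : forall e, 0 < e -> 2 * dot u v <= e * nsq u.
      move=> e He. have := young u v He. rewrite Hn; lra.
    rewrite Hv Rmult_0_r.
    case: (Rle_lt_dec (dot u v) 0) => // Hd.
    have Hp := nsq_ge0 u.
    pose e := dot u v / (nsq u + 1).
    have He : 0 < e by apply: Rdiv_lt_0_compat; lra.
    have := H e He. rewrite /e.
    have : nsq u / (nsq u + 1) < 1.
      apply: (Rmult_lt_reg_r (nsq u + 1)); first lra.
      rewrite /Rdiv Rmult_assoc Rinv_l; lra.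
    have -> : dot u v / (nsq u + 1) * nsq u = dot u v * (nsq u / (nsq u + 1)) by field; lra.
    nra.
  + have Hu0 := vnorm_ge0 u. have Hv0 := vnorm_ge0 v.
    have Ha : 0 < vnorm v / vnorm u by apply: Rdiv_lt_0_compat; lra.
    have := young u v Ha.
    rewrite -!vnorm_sq Rinv_div.
    have -> : vnorm v / vnorm u * (vnorm u * vnorm u) + vnorm u / vnorm v * (vnorm v * vnorm v)
            = 2 * (vnorm u * vnorm v) by field; lra.
    lra.
Qed.

Lemma cs_abs n (u v : vec n) : Rabs (dot u v) <= vnorm u * vnorm v.
Proof.
apply: Rabs_le; split; last exact: cs.
have : dot (vscal (-1) u) v <= vnorm (vscal (-1) u) * vnorm v by exact: cs.
have -> : dot (vscal (-1) u) v = -1 * dot u v.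
  by rewrite /dot /vscal -rsumZ; apply: rsum_ext => i; ring.
have -> : vnorm (vscal (-1) u) = vnorm u.
  rewrite /vnorm; congr sqrt; rewrite /nsq /dot /vscal; apply: rsum_ext => i; ring.
lra.
Qed.
Lemma vnorm_le n (u : vec n) a : 0 <= a -> nsq u <= a * a -> vnorm u <= a.
Proof.
move=> Ha H. rewrite /vnorm -(sqrt_square a) //. exact: sqrt_le_1_alt.
Qed.
Lemma vnorm_scal n c (u : vec n) : vnorm (vscal c u) = Rabs c * vnorm u.
Proof.
rewrite /vnorm.
have -> : nsq (vscal c u) = (c * c) * nsq u.
  by rewrite /nsq /dot /vscal -rsumZ; apply: rsum_ext => i; ring.
rewrite sqrt_mult; [|nra|exact: nsq_ge0].
by rewrite -Rsqr_def sqrt_Rsqr_abs.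
Qed.
Lemma vnorm_add n (u v : vec n) : vnorm (vadd u v) <= vnorm u + vnorm v.
Proof.
apply: vnorm_le; first by have := vnorm_ge0 u; have := vnorm_ge0 v; lra.
have -> : nsq (vadd u v) = nsq u + 2 * dot u v + nsq v.
  by rewrite /nsq /dot /vadd; rfold; apply: rsum_ext => i; ring.
rewrite -!vnorm_sq. have := cs u v. lra.
Qed.
Lemma vnorm_sub n (u v : vec n) : vnorm (vsub u v) <= vnorm u + vnorm v.
Proof.
have -> : vsub u v = vadd u (vscal (-1) v).
  by apply: functional_extensionality => i; rewrite /vsub /vadd /vscal; ring.
apply: Rle_trans (vnorm_add _ _) _. rewrite vnorm_scal.
have -> : Rabs (-1) = 1 by rewrite Rabs_Ropp Rabs_R1.
lra.
Qed.
Lemma vnorm_vsum I n (F : 'I_I -> vec n) : vnorm (vsum F) <= rsum (fun i => vnorm (F i)).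
Proof.
elim: I F => [|I IH] F.
- have -> : vsum F = (fun _ => 0).
    apply: functional_extensionality => a; rewrite /vsum /rsum big_ord0 //.
  rewrite /rsum big_ord0. apply: vnorm_le; first lra.
  rewrite /nsq /dot (@rsum_ext _ _ (fun _ => 0)); first by rewrite rsum_const; lra.
  by move=> i /=; ring.
- have -> : vsum F = vadd (vsum (fun i : 'I_I => F (widen_ord (leqnSn I) i))) (F ord_max).
    by apply: functional_extensionality => a; rewrite /vsum /vadd /rsum big_ord_recr.
  rewrite /rsum big_ord_recr /=.
  apply: Rle_trans (vnorm_add _ _) _.
  apply: Rplus_le_compat_r; exact: IH.
Qed.
Lemma dot_tmv m n (M : mat m n) y x : dot (tmv M y) x = dot y (mv M x).
Proof.
rewrite /dot /tmv /mv.
have -> : rsum (fun b => rsum (fun a => M a b * y a) * x b)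
        = rsum (fun b => rsum (fun a => M a b * y a * x b)).
  by apply: rsum_ext => b; rewrite Rmult_comm -rsumZ; apply: rsum_ext => a; ring.
rewrite rsum_exch; apply: rsum_ext => a.
by rewrite -rsumZ; apply: rsum_ext => b; ring.
Qed.
Lemma dot_scal_l n c (u v : vec n) : dot (vscal c u) v = c * dot u v.
Proof. by rewrite /dot /vscal -rsumZ; apply: rsum_ext => i; ring. Qed.
Lemma dot_vsum_l I n (F : 'I_I -> vec n) v : dot (vsum F) v = rsum (fun i => dot (F i) v).
Proof.
rewrite /dot /vsum.
have -> : rsum (fun a => rsum (fun i => F i a) * v a) = rsum (fun a => rsum (fun i => F i a * v a)).
  by apply: rsum_ext => a; rewrite Rmult_comm -rsumZ; apply: rsum_ext => i; ring.
exact: rsum_exch.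
Qed.
Lemma dot_comm n (u v : vec n) : dot u v = dot v u.
Proof. by apply: rsum_ext => i; ring. Qed.
Lemma vnorm_sqrt n (u : vec n) : vnorm u = sqrt (nsq u).
Proof. by []. Qed.
Lemma avg_le n (F : 'I_n -> R) C : (0 < n)%N -> (forall i, F i <= C) -> / INR n * rsum F <= C.
Proof.
move=> Hn H. have Hn' : 0 < INR n by apply: lt_0_INR; apply/ltP.
apply: Rle_trans (Rmult_le_compat_l _ _ _ _ (rsum_le H)) _.
  by left; apply: Rinv_0_lt_compat.
rewrite rsum_const. right; field; lra.
Qed.
Lemma avg_abs n (F : 'I_n -> R) C : (0 < n)%N -> (forall i, Rabs (F i) <= C) -> Rabs (/ INR n * rsum F) <= C.
Proof.
move=> Hn H. have Hn' : 0 < INR n by apply: lt_0_INR; apply/ltP.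
rewrite Rabs_mult Rabs_inv Rabs_pos_eq; last lra.
apply: Rle_trans (Rmult_le_compat_l _ _ _ _ (rsum_abs F)) _.
  by left; apply: Rinv_0_lt_compat.
exact: avg_le.
Qed.

Section Prob.
Variables (n m q r : nat).
Variables (g : 'I_m -> vec q -> vec r) (Jg : 'I_m -> vec q -> mat r q)
          (f : 'I_n -> vec r -> R) (gf : 'I_n -> vec r -> vec r).

Lemma rsum_mulr k (F : 'I_k -> R) c : rsum F * c = rsum (fun i => F i * c).
Proof. by rewrite Rmult_comm -rsumZ; apply: rsum_ext => i; ring. Qed.

Lemma mv_Jbar x d : mv (Jbar Jg x) d = vscal (/ INR m) (vsum (fun j => mv (Jg j x) d)).
Proof.
apply: functional_extensionality => a. rewrite /mv /Jbar /vscal /vsum.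
rewrite -rsumZ (@rsum_ext _ _ (fun j => rsum (fun b => / INR m * (Jg j x a b * d b)))); last first.
  by move=> j; rewrite rsumZ.
rewrite -rsum_exch; apply: rsum_ext => b.
by rewrite Rmult_assoc rsum_mulr rsumZ.
Qed.

Lemma Jbar_dot x w d : dot (tmv (Jbar Jg x) w) d = / INR m * rsum (fun j => dot (tmv (Jg j x) w) d).
Proof.
rewrite dot_tmv mv_Jbar dot_comm dot_scal_l dot_vsum_l; congr (_ * _).
by apply: rsum_ext => j; rewrite dot_tmv dot_comm.
Qed.

Lemma gradF_dot x d : dot (gradF g Jg gf x) d =
  / INR n * rsum (fun i => / INR m * rsum (fun j => dot (tmv (Jg j x) (gf i (gbar g x))) d)).
Proof.
rewrite /gradF dot_scal_l dot_vsum_l; congr (_ * _); apply: rsum_ext => i; exact: Jbar_dot.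
Qed.

Lemma gradF_lip LF x y d : (0 < n)%N -> (0 < m)%N ->
  (forall i j x y,
     vnorm (vsub (tmv (Jg j x) (gf i (gbar g x))) (tmv (Jg j y) (gf i (gbar g y))))
       <= LF * vnorm (vsub x y)) ->
  dot (gradF g Jg gf y) d - dot (gradF g Jg gf x) d <= LF * vnorm (vsub y x) * vnorm d.
Proof.
move=> Hn Hm H. rewrite !gradF_dot -Rmult_minus_distr_l -rsumB.
apply: avg_le => // i. rewrite -Rmult_minus_distr_l -rsumB. apply: avg_le => // j.
have -> : dot (tmv (Jg j y) (gf i (gbar g y))) d - dot (tmv (Jg j x) (gf i (gbar g x))) d
   = dot (vsub (tmv (Jg j y) (gf i (gbar g y))) (tmv (Jg j x) (gf i (gbar g x)))) d.
  by rewrite /dot /vsub -rsumB; apply: rsum_ext => b; ring.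
apply: Rle_trans (cs _ _) _. apply: Rmult_le_compat_r; first exact: vnorm_ge0.
exact: H.
Qed.

Lemma Fobj_convex : (0 < n)%N -> (forall i, convex (Fi g f i)) -> convex (Fobj g f).
Proof.
move=> Hn H x y t Ht. rewrite /Fobj.
have Hn' : 0 < INR n by apply: lt_0_INR; apply/ltP.
have -> : t * (/ INR n * rsum (fun i => Fi g f i x)) + (1 - t) * (/ INR n * rsum (fun i => Fi g f i y))
  = / INR n * rsum (fun i => t * Fi g f i x + (1 - t) * Fi g f i y).
  rewrite rsumD !rsumZ; ring.
apply: Rmult_le_compat_l; first by left; apply: Rinv_0_lt_compat.
apply: rsum_le => i; exact: H.
Qed.
End Prob.
Lemma fin_delta k (P : 'I_k -> R -> Prop) :
  (forall i, exists d, 0 < d /\ forall t, 0 < t < d -> P i t) ->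
  exists d, 0 < d /\ forall i t, 0 < t < d -> P i t.
Proof.
move=> H.
suff: forall k0, exists d, 0 < d /\ forall (i : 'I_k) t, (i < k0)%N -> 0 < t < d -> P i t.
  case/(_ k) => d [Hd H']; exists d; split => // i t Ht; apply: H' => //.
elim=> [|k0 [d [Hd IH]]]; first by exists 1; split; [lra|].
case: (ltnP k0 k) => Hk.
- case: (H (Ordinal Hk)) => d0 [Hd0 H0].
  exists (Rmin d d0); split; first by apply: Rmin_glb_lt.
  move=> i t Hi Ht. have := Rmin_l d d0; have := Rmin_r d d0 => ? ?.
  rewrite ltnS leq_eqVlt in Hi; case/orP: Hi => Hi.
  + have -> : i = Ordinal Hk by apply: val_inj; exact/eqP.
    apply: H0; lra.
  + apply: IH => //; lra.
- exists d; split => // i t Hi Ht; apply: IH => //.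
  exact: leq_trans (ltn_ord i) Hk.
Qed.

Definition xpt q (x d : vec q) (t : R) : vec q := fun b => x b + t * d b.

Lemma vsub_xpt q (x d : vec q) t : vsub (xpt x d t) x = vscal t d.
Proof. by apply: functional_extensionality => b; rewrite /vsub /xpt /vscal; ring. Qed.

Section Prob2.
Variables (n m q r : nat).
Variables (g : 'I_m -> vec q -> vec r) (Jg : 'I_m -> vec q -> mat r q)
          (f : 'I_n -> vec r -> R) (gf : 'I_n -> vec r -> vec r).
Hypothesis Hm : (0 < m)%N.
Hypothesis Hn : (0 < n)%N.
Hypothesis Hg : forall j, has_jacobian (g j) (Jg j).
Hypothesis Hf : forall i, has_gradient (f i) (gf i).

Lemma gbar_dir x d eps : 0 < eps -> exists del, 0 < del /\ forall t, 0 < t < del ->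
  vnorm (vsub (vsub (gbar g (xpt x d t)) (gbar g x)) (vscal t (mv (Jbar Jg x) d))) <= eps * t.
Proof.
move=> He. have Hd0 := vnorm_ge0 d.
pose e' := eps / (vnorm d + 1).
have He' : 0 < e' by apply: Rdiv_lt_0_compat; lra.
have Hed : e' * vnorm d <= eps.
  rewrite /e' /Rdiv Rmult_assoc (Rmult_comm (/ _)) -Rmult_assoc.
  apply: (Rmult_le_reg_r (vnorm d + 1)); first lra.
  rewrite Rmult_assoc Rinv_l; lra.
pose E j t := vsub (vsub (g j (xpt x d t)) (g j x)) (mv (Jg j x) (vsub (xpt x d t) x)).
have [del [Hdel H]] : exists del, 0 < del /\ forall j t, 0 < t < del -> vnorm (E j t) <= e' * (t * vnorm d).
  apply: fin_delta => j.
  case: (Hg j x He') => dj [Hdj Hj].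
  exists (dj / (vnorm d + 1)); split; first by apply: Rdiv_lt_0_compat; lra.
  move=> t Ht.
  have Hn1 : vnorm (vsub (xpt x d t) x) = t * vnorm d.
    by rewrite vsub_xpt vnorm_scal Rabs_pos_eq //; lra.
  rewrite -Hn1; apply: Hj. rewrite Hn1.
  have : t * (vnorm d + 1) < dj.
    case: Ht => _ Ht. apply: (Rmult_lt_reg_r (/ (vnorm d + 1))).
      apply: Rinv_0_lt_compat; lra.
    rewrite Rmult_assoc Rinv_r; lra.
  nra.
exists del; split => // t Ht.
have Hm' : 0 < INR m by apply: lt_0_INR; apply/ltP.
have -> : vsub (vsub (gbar g (xpt x d t)) (gbar g x)) (vscal t (mv (Jbar Jg x) d))
   = vscal (/ INR m) (vsum (fun j => E j t)).
  apply: functional_extensionality => a.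
  rewrite mv_Jbar /E vsub_xpt /vsub /vscal /gbar /vsum /vscal /mv; rfold.
  apply: rsum_ext => j.
  have -> : rsum (fun b => Jg j x a b * (t * d b)) = t * rsum (fun b => Jg j x a b * d b).
    by rewrite -rsumZ; apply: rsum_ext => b; ring.
  ring.
rewrite vnorm_scal Rabs_pos_eq; last by left; apply: Rinv_0_lt_compat.
apply: Rle_trans (Rmult_le_compat_l _ _ _ _ (vnorm_vsum _)) _.
  by left; apply: Rinv_0_lt_compat.
apply: Rle_trans (avg_le (C := e' * (t * vnorm d)) Hm _) _.
  by move=> j; apply: H.
have := Ht; case=> Ht0 _. nra.
Qed.

Lemma fi_dir i x d eps : 0 < eps -> exists del, 0 < del /\ forall t, 0 < t < del ->
  Rabs (f i (gbar g (xpt x d t)) - f i (gbar g x) - t * dot (tmv (Jbar Jg x) (gf i (gbar g x))) d)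
   <= eps * t.
Proof.
move=> He.
set u := gbar g x. set JD := mv (Jbar Jg x) d.
set K1 := vnorm JD. set K2 := vnorm (gf i u).
have HK1 : 0 <= K1 by exact: vnorm_ge0.
have HK2 : 0 <= K2 by exact: vnorm_ge0.
pose eg := eps / (2 * (K2 + 1)).
have Heg : 0 < eg by apply: Rdiv_lt_0_compat; lra.
have Heg2 : K2 * eg <= eps / 2.
  rewrite /eg. apply: (Rmult_le_reg_r (2 * (K2 + 1))); first lra.
  have -> : K2 * (eps / (2 * (K2 + 1))) * (2 * (K2 + 1)) = K2 * eps by field; lra.
  nra.
pose ef := eps / (2 * (K1 + eg + 1)).
have Hef : 0 < ef by apply: Rdiv_lt_0_compat; lra.
have Hef2 : ef * (eg + K1) <= eps / 2.
  rewrite /ef. apply: (Rmult_le_reg_r (2 * (K1 + eg + 1))); first lra.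
  have -> : eps / (2 * (K1 + eg + 1)) * (eg + K1) * (2 * (K1 + eg + 1)) = eps * (eg + K1) by field; lra.
  nra.
case: (gbar_dir x d Heg) => dg [Hdg Hg'].
case: (Hf i u Hef) => df [Hdf Hf'].
exists (Rmin dg (df / (eg + K1 + 1))); split.
  apply: Rmin_glb_lt => //; apply: Rdiv_lt_0_compat; lra.
move=> t [Ht0 Ht1].
have Ht2 : t < dg by apply: Rlt_le_trans Ht1 (Rmin_l _ _).
have Ht3 : t * (eg + K1 + 1) < df.
  have Ht3 : t < df / (eg + K1 + 1) by apply: Rlt_le_trans Ht1 (Rmin_r _ _).
  apply: (Rmult_lt_reg_r (/ (eg + K1 + 1))); first by apply: Rinv_0_lt_compat; lra.
  rewrite Rmult_assoc Rinv_r; lra.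
set D := vsub (gbar g (xpt x d t)) u.
set e := vsub D (vscal t JD).
have He1 : vnorm e <= eg * t by apply: Hg'; lra.
have HD : vnorm D <= eg * t + t * K1.
  have -> : D = vadd e (vscal t JD).
    by apply: functional_extensionality => a; rewrite /e /vadd /vsub /vscal; ring.
  apply: Rle_trans (vnorm_add _ _) _. rewrite vnorm_scal Rabs_pos_eq -/K1; lra.
have HfD := Hf' (gbar g (xpt x d t)).
have HD0 := vnorm_ge0 D.
have HfD' : Rabs (f i (gbar g (xpt x d t)) - f i u - dot (gf i u) D) <= ef * vnorm D.
  apply: HfD. rewrite -/D. nra.
have Hde : dot (gf i u) D - t * dot (tmv (Jbar Jg x) (gf i u)) d = dot (gf i u) e.
  rewrite dot_tmv -/JD /e /dot /vsub /vscal -rsumZ -rsumB; apply: rsum_ext => a; ring.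
have Hce := cs_abs (gf i u) e. rewrite -/K2 in Hce.
have -> : f i (gbar g (xpt x d t)) - f i u - t * dot (tmv (Jbar Jg x) (gf i u)) d
  = (f i (gbar g (xpt x d t)) - f i u - dot (gf i u) D) + dot (gf i u) e by rewrite -Hde; ring.
apply: Rle_trans (Rabs_triang _ _) _.
have H1 : ef * vnorm D <= ef * (t * (eg + K1)) by apply: Rmult_le_compat_l; lra.
have H2 : K2 * vnorm e <= K2 * (eg * t) by apply: Rmult_le_compat_l; lra.
nra.
Qed.

Lemma Fobj_dir x d eps : 0 < eps -> exists del, 0 < del /\ forall t, 0 < t < del ->
  Rabs (Fobj g f (xpt x d t) - Fobj g f x - t * dot (gradF g Jg gf x) d) <= eps * t.
Proof.
move=> He.
have [del [Hdel H]] := fin_delta (fun i => fi_dir i x d He).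
exists del; split => // t Ht.
have -> : Fobj g f (xpt x d t) - Fobj g f x - t * dot (gradF g Jg gf x) d
  = / INR n * rsum (fun i => f i (gbar g (xpt x d t)) - f i (gbar g x)
        - t * dot (tmv (Jbar Jg x) (gf i (gbar g x))) d).
  rewrite /Fobj /gradF dot_scal_l dot_vsum_l /Fi. rewrite !rsumB rsumZ. ring.
apply: avg_abs => // i; exact: H.
Qed.
End Prob2.
Lemma le_eps a b : (forall eps, 0 < eps -> a <= b + eps) -> a <= b.
Proof.
move=> H. case: (Rle_lt_dec a b) => // Hab.
have := H ((a - b) / 2) ltac:(lra). lra.
Qed.

Section Prob3.
Variables (n m q r : nat).
Variables (g : 'I_m -> vec q -> vec r) (Jg : 'I_m -> vec q -> mat r q)
          (f : 'I_n -> vec r -> R) (gf : 'I_n -> vec r -> vec r) (LF : R).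
Hypothesis Hm : (0 < m)%N.
Hypothesis Hn : (0 < n)%N.
Hypothesis Hg : forall j, has_jacobian (g j) (Jg j).
Hypothesis Hf : forall i, has_gradient (f i) (gf i).
Hypothesis Hconv : forall i, convex (Fi g f i).
Hypothesis HLF : 0 < LF.
Hypothesis Hlip : forall i j x y,
     vnorm (vsub (tmv (Jg j x) (gf i (gbar g x))) (tmv (Jg j y) (gf i (gbar g y))))
       <= LF * vnorm (vsub x y).

Lemma grad_ineq x y : Fobj g f x + dot (gradF g Jg gf x) (vsub y x) <= Fobj g f y.
Proof.
set d := vsub y x. set D := dot (gradF g Jg gf x) d.
suff: D <= Fobj g f y - Fobj g f x by lra.
apply: le_eps => eps He.
case: (Fobj_dir Hm Hn Hg Hf x d He) => del [Hdel H].
pose t := Rmin (1/2) (del / 2).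
have Ht0 : 0 < t by apply: Rmin_glb_lt; lra.
have Ht1 : t <= 1/2 by apply: Rmin_l.
have Ht2 : t <= del / 2 by apply: Rmin_r.
have := H t ltac:(lra). rewrite -/D => Ha.
have Hc := Fobj_convex Hn Hconv y x (t := t) ltac:(lra).
have Hx : xpt x d t = vadd (vscal t y) (vscal (1 - t) x).
  by apply: functional_extensionality => b; rewrite /xpt /d /vadd /vscal /vsub; ring.
rewrite -Hx in Hc.
have H0 := Rle_abs (- (Fobj g f (xpt x d t) - Fobj g f x - t * D)).
rewrite Rabs_Ropp in H0.
have : t * D <= t * (Fobj g f y - Fobj g f x + eps) by nra.
move=> H3. apply: (Rmult_le_reg_l t) => //.
Qed.

Lemma descent x y : Fobj g f y <= Fobj g f x + dot (gradF g Jg gf x) (vsub y x) + LF / 2 * nsq (vsub y x).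
Proof.
set d := vsub y x. set D := dot (gradF g Jg gf x) d. set Q := nsq d.
have HQ : 0 <= Q by exact: nsq_ge0.
have key : forall N, (0 < N)%coq_nat -> Fobj g f y - Fobj g f x <= D + LF * Q / 2 + LF * Q / (2 * INR N).
  move=> N HN. have HN' : 0 < INR N by apply: lt_0_INR.
  pose p k := xpt x d (INR k / INR N).
  have Hk : forall k, Fobj g f (p k) - Fobj g f x <=
       INR k / INR N * D + LF * Q * (INR k * (INR k + 1)) / (2 * (INR N * INR N)).
    elim=> [|k IH].
    + have -> : p 0%nat = x.
        by apply: functional_extensionality => b; rewrite /p /xpt /=; field; lra.
      have -> : INR 0 = 0 by []. right; field; lra.
    + have Hgi := grad_ineq (p k.+1) (p k).
      have Hv : vsub (p k) (p k.+1) = vscal (- / INR N) d.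
        apply: functional_extensionality => b; rewrite /p /xpt /vsub /vscal S_INR; field; lra.
      rewrite Hv dot_comm dot_scal_l dot_comm in Hgi.
      have Hl := gradF_lip x (p k.+1) d Hn Hm Hlip.
      have Hv2 : vsub (p k.+1) x = vscal (INR k.+1 / INR N) d by rewrite vsub_xpt.
      rewrite Hv2 vnorm_scal Rabs_pos_eq in Hl; last first.
        by apply: Rmult_le_pos; [apply: pos_INR | left; apply: Rinv_0_lt_compat].
      rewrite !Rmult_assoc vnorm_sq -/Q -/D in Hl.
      rewrite S_INR in Hl *.
      have Hk0 := pos_INR k.
      set G := dot (gradF g Jg gf (p k.+1)) d in Hgi Hl.
      have E1 : - / INR N * G = - (G / INR N) by field; lra.
      rewrite E1 in Hgi.
      have E2 : LF * ((INR k + 1) * (/ INR N * Q)) = (LF * Q * (INR k + 1)) / INR N by field; lra.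
      rewrite E2 in Hl.
      have Hl' : G / INR N <= D / INR N + LF * Q * (INR k + 1) / (INR N * INR N).
        have -> : LF * Q * (INR k + 1) / (INR N * INR N) = (LF * Q * (INR k + 1) / INR N) / INR N
          by field; lra.
        rewrite /Rdiv -Rmult_plus_distr_r. apply: Rmult_le_compat_r.
          by left; apply: Rinv_0_lt_compat.
        rewrite /Rdiv in Hl; lra.
      have -> : (INR k + 1) / INR N * D + LF * Q * ((INR k + 1) * (INR k + 1 + 1)) / (2 * (INR N * INR N))
        = (INR k / INR N * D + LF * Q * (INR k * (INR k + 1)) / (2 * (INR N * INR N)))
          + (D / INR N + LF * Q * (INR k + 1) / (INR N * INR N)) by field; lra.
      lra.
  have HpN : p N = y.
    by apply: functional_extensionality => b; rewrite /p /xpt /d /vsub; field; lra.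
  have := Hk N. rewrite HpN.
  have -> : INR N / INR N * D + LF * Q * (INR N * (INR N + 1)) / (2 * (INR N * INR N))
     = D + LF * Q / 2 + LF * Q / (2 * INR N) by field; lra.
  done.
suff : Fobj g f y - Fobj g f x <= D + LF / 2 * Q by lra.
apply: le_eps => eps He.
have HLQ : 0 <= LF * Q by nra.
case: (archimed_cor1 (eps / (LF * Q / 2 + 1))) => [|N [HN1 HN2]].
  by apply: Rdiv_lt_0_compat; lra.
have HN' : 0 < INR N by apply: lt_0_INR.
have := key N HN2.
have : LF * Q / (2 * INR N) <= eps.
  have -> : LF * Q / (2 * INR N) = (LF * Q / 2) * / INR N by field; lra.
  have : / INR N * (LF * Q / 2 + 1) < eps.
    apply: (Rmult_lt_reg_r (/ (LF * Q / 2 + 1))); first by apply: Rinv_0_lt_compat; lra.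
    rewrite Rmult_assoc Rinv_r; [lra|lra].
  have : 0 < / INR N by apply: Rinv_0_lt_compat.
  nra.
lra.
Qed.
End Prob3.
Lemma mv_xpt p q (A : mat p q) (x d : vec q) t : mv A (xpt x d t) = xpt (mv A x) (mv A d) t.
Proof.
apply: functional_extensionality => a; rewrite /mv /xpt.
rewrite -rsumZ -rsumD; apply: rsum_ext => b; ring.
Qed.

Lemma small_t Lin Quad : (forall t, 0 < t <= 1 -> 0 <= t * Lin + t * t * Quad) -> 0 <= Lin.
Proof.
move=> H. case: (Rle_lt_dec 0 Lin) => // HL.
pose t := Rmin 1 (- Lin / (Rabs Quad + 1)).
have HQ := Rabs_pos Quad.
have Ht0 : 0 < t by apply: Rmin_glb_lt; [lra | apply: Rdiv_lt_0_compat; lra].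
have Ht1 : t <= 1 by apply: Rmin_l.
have Ht2 : t * (Rabs Quad + 1) <= - Lin.
  have : t <= - Lin / (Rabs Quad + 1) by apply: Rmin_r.
  move=> H2. have -> : - Lin = (- Lin / (Rabs Quad + 1)) * (Rabs Quad + 1) by field; lra.
  apply: Rmult_le_compat_r; lra.
have := H t ltac:(lra). clearbody t.
have : t * t * Quad <= t * t * Rabs Quad.
  apply: Rmult_le_compat_l; [nra | exact: Rle_abs].
have : t * (t * (Rabs Quad + 1)) <= t * (- Lin) by apply: Rmult_le_compat_l; lra.
have : 0 < t * t by nra.
lra.
Qed.

Lemma vi_lemma p q l (A : mat p q) (B : mat p l) (v xk x1 xs : vec q) (lk : vec p) (w1 : vec l)
  rho a cc :
  (forall x, dot v (vsub x1 xk) + dot lk (mv A x1) + rho / 2 * nsq (vadd (mv A x1) (mv B w1))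
                     + a * gnorm2 cc (vsub x1 xk)
                   <= dot v (vsub x xk) + dot lk (mv A x) + rho / 2 * nsq (vadd (mv A x) (mv B w1))
                     + a * gnorm2 cc (vsub x xk)) ->
  0 <= dot v (vsub xs x1) + dot (tmv A (vadd lk (vscal rho (vadd (mv A x1) (mv B w1))))) (vsub xs x1)
       + 2 * a * cc * dot (vsub x1 xk) (vsub xs x1).
Proof.
move=> H. set d := vsub xs x1.
apply: (small_t (Quad := rho / 2 * nsq (mv A d) + a * cc * nsq d)) => t Ht.
have := H (xpt x1 d t). rewrite mv_xpt /gnorm2.
have E1 : dot v (vsub (xpt x1 d t) xk) = dot v (vsub x1 xk) + t * dot v d.
  by rewrite /dot /vsub /xpt -rsumZ -rsumD; apply: rsum_ext => i; ring.
have E2 : dot lk (xpt (mv A x1) (mv A d) t) = dot lk (mv A x1) + t * dot lk (mv A d).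
  by rewrite /dot /xpt -rsumZ -rsumD; apply: rsum_ext => i; ring.
have E3 : nsq (vadd (xpt (mv A x1) (mv A d) t) (mv B w1)) = nsq (vadd (mv A x1) (mv B w1))
   + 2 * t * dot (vadd (mv A x1) (mv B w1)) (mv A d) + t * t * nsq (mv A d).
  by rewrite /nsq /dot /vadd /xpt; rfold; apply: rsum_ext => i; ring.
have E4 : nsq (vsub (xpt x1 d t) xk) = nsq (vsub x1 xk) + 2 * t * dot (vsub x1 xk) d + t * t * nsq d.
  by rewrite /nsq /dot /vsub /xpt; rfold; apply: rsum_ext => i; ring.
have E5 : dot (tmv A (vadd lk (vscal rho (vadd (mv A x1) (mv B w1))))) d
   = dot lk (mv A d) + rho * dot (vadd (mv A x1) (mv B w1)) (mv A d).
  rewrite dot_tmv /dot /vadd /vscal -rsumZ -rsumD; apply: rsum_ext => i; ring.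
rewrite E1 E2 E3 E4 E5. move=> H'. nra.
Qed.
Section Prob4.
Variables (n m q r : nat).
Variables (g : 'I_m -> vec q -> vec r) (Jg : 'I_m -> vec q -> mat r q)
          (f : 'I_n -> vec r -> R) (gf : 'I_n -> vec r -> vec r) (LF : R).
Hypothesis Hm : (0 < m)%N.
Hypothesis Hn : (0 < n)%N.
Hypothesis Hg : forall j, has_jacobian (g j) (Jg j).
Hypothesis Hf : forall i, has_gradient (f i) (gf i).
Hypothesis Hconv : forall i, convex (Fi g f i).
Hypothesis HLF : 0 < LF.
Hypothesis Hlip : forall i j x y,
     vnorm (vsub (tmv (Jg j x) (gf i (gbar g x))) (tmv (Jg j y) (gf i (gbar g y))))
       <= LF * vnorm (vsub x y).

Lemma pointwise p l (A : mat p q) (B : mat p l) (v xk x1 xs : vec q) (lk : vec p) (w1 : vec l)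
  rho eta cc : 0 < eta -> eta * LF <= cc ->
  (forall x, dot v (vsub x1 xk) + dot lk (mv A x1) + rho / 2 * nsq (vadd (mv A x1) (mv B w1))
                     + / (2 * eta) * gnorm2 cc (vsub x1 xk)
                   <= dot v (vsub x xk) + dot lk (mv A x) + rho / 2 * nsq (vadd (mv A x) (mv B w1))
                     + / (2 * eta) * gnorm2 cc (vsub x xk)) ->
  gnorm2 cc (vsub x1 xs) <= gnorm2 cc (vsub xk xs)
     - 2 * eta * (Fobj g f x1 - Fobj g f xs)
     - 2 * eta * dot (vsub v (gradF g Jg gf xk)) (vsub x1 xs)
     + 2 * eta * dot (tmv A (vadd lk (vscal rho (vadd (mv A x1) (mv B w1))))) (vsub xs x1).
Proof.
move=> He Hc H.
have VI := vi_lemma xs H.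
set T := dot (tmv A _) (vsub xs x1) in VI *.
have Hgi := grad_ineq Hm Hn Hg Hf Hconv xk xs.
have Hde := descent Hm Hn Hg Hf Hconv HLF Hlip xk x1.
set G := gradF g Jg gf xk in Hgi Hde *.
have I1 : 2 * dot (vsub x1 xk) (vsub xs x1) = nsq (vsub xk xs) - nsq (vsub x1 xs) - nsq (vsub x1 xk).
  by rewrite /nsq /dot /vsub; rfold; apply: rsum_ext => i; ring.
have I2 : dot v (vsub xs x1) = dot G (vsub xs x1) - dot (vsub v G) (vsub x1 xs).
  by rewrite /dot /vsub; rfold; apply: rsum_ext => i; ring.
have I3 : dot G (vsub xs xk) - dot G (vsub x1 xk) = dot G (vsub xs x1).
  by rewrite /dot /vsub; rfold; apply: rsum_ext => i; ring.
have Ha : 2 * eta * / (2 * eta) = 1 by field; lra.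
rewrite /gnorm2.
have HN01 := nsq_ge0 (vsub x1 xk).
set a := / (2 * eta) in VI Ha.
set N0 := nsq (vsub xk xs) in I1 *. set N1 := nsq (vsub x1 xs) in I1 *.
set N01 := nsq (vsub x1 xk) in I1 Hde HN01 *.
set D1 := dot (vsub x1 xk) (vsub xs x1) in VI I1.
set Dv := dot (vsub v G) (vsub x1 xs) in I2 *.
rewrite I2 in VI.
set F1 := Fobj g f x1 in Hde *. set Fs := Fobj g f xs in Hgi *. set Fk := Fobj g f xk in Hgi Hde.
set Gd := dot G (vsub xs x1) in VI I2 I3.
have V2 : 0 <= 2 * eta * (Gd - Dv + T) + (2 * eta * a) * cc * (2 * D1).
  have : 0 <= 2 * eta * (Gd - Dv + T + 2 * a * cc * D1) by apply: Rmult_le_pos; lra.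
  move=> h; lra.
rewrite Ha I1 in V2.
have Hsm : Gd <= Fs - F1 + LF / 2 * N01 by lra.
have : 2 * eta * Gd <= 2 * eta * (Fs - F1) + eta * LF * N01.
  have : 2 * eta * Gd <= 2 * eta * (Fs - F1 + LF / 2 * N01) by apply: Rmult_le_compat_l; lra.
  move=> h; lra.
have : eta * LF * N01 <= cc * N01 by apply: Rmult_le_compat_r.
lra.
Qed.
End Prob4.
Lemma E_le n m (C u : R) (a b c d e : 'I_n -> 'I_m -> R) : 0 <= C ->
  (forall i j, a i j <= b i j - u * c i j - u * d i j + u * e i j) ->
  C * rsum (fun i => rsum (fun j => a i j)) <=
  C * rsum (fun i => rsum (fun j => b i j)) - u * (C * rsum (fun i => rsum (fun j => c i j)))
  - u * (C * rsum (fun i => rsum (fun j => d i j))) + u * (C * rsum (fun i => rsum (fun j => e i j))).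
Proof.
move=> HC H.
have -> : C * rsum (fun i => rsum (fun j => b i j)) - u * (C * rsum (fun i => rsum (fun j => c i j)))
  - u * (C * rsum (fun i => rsum (fun j => d i j))) + u * (C * rsum (fun i => rsum (fun j => e i j)))
  = C * rsum (fun i => rsum (fun j => b i j - u * c i j - u * d i j + u * e i j)).
  have Hi : forall i, rsum (fun j => b i j - u * c i j - u * d i j + u * e i j)
     = rsum (fun j => b i j) - u * rsum (fun j => c i j)
     - u * rsum (fun j => d i j) + u * rsum (fun j => e i j).
    by move=> i; rewrite rsumD !rsumB !rsumZ.
  rewrite (rsum_ext Hi) rsumD !rsumB !rsumZ; ring.
apply: Rmult_le_compat_l => //. apply: rsum_le => i; apply: rsum_le => j; exact: H.
Qed.

Lemma c_mono (c : nat -> nat -> R) s K : (forall k, (k < K)%N -> c s k.+1 <= c s k) ->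
  forall k, (k <= K.-1)%N -> c s K.-1 <= c s k.
Proof.
move=> H.
suff: forall j k, (k + j)%N = K.-1 -> c s K.-1 <= c s k.
  move=> H' k Hk. apply: (H' (K.-1 - k)%N); lia.
elim=> [|j IH] k Hk.
- rewrite addn0 in Hk; rewrite Hk; lra.
- apply: Rle_trans (IH k.+1 _) (H k _); lia.
Qed.

Theorem lemma8 (n m p q r l : nat)
  (g : 'I_m -> vec q -> vec r) (Jg : 'I_m -> vec q -> mat r q)
  (f : 'I_n -> vec r -> R) (gf : 'I_n -> vec r -> vec r)
  (Rw : vec l -> R) (A : mat p q) (B : mat p l)
  (xs : vec q) (ws : vec l) (ls : vec p) (LF : R)
  (S K : nat) (rho : R) (c : nat -> nat -> R)
  (xhat0 : vec q) (what0 : vec l) (lhat0 : vec p)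
  (X : spath n m -> nat -> nat -> vec q) (W : spath n m -> nat -> nat -> vec l)
  (Lam : spath n m -> nat -> nat -> vec p) (Xt : spath n m -> nat -> vec q) :
  (0 < n)%N -> (0 < m)%N -> (0 < p)%N -> (0 < q)%N -> (0 < r)%N -> (0 < l)%N ->
  (* standing setup: g_j and f_i continuously differentiable *)
  (forall j, C1_map (g j) (Jg j)) ->
  (forall i, C1_scalar (f i) (gf i)) ->
  (* (A1) *)
  (forall i, convex (Fi g f i)) -> convex Rw -> lsc Rw ->
  opt_primal_dual g f Rw A B xs ws ls ->
  (* (A4) *)
  0 < LF ->
  (forall i j x y,
     vnorm (vsub (tmv (Jg j x) (gf i (gbar g x))) (tmv (Jg j y) (gf i (gbar g y))))
       <= LF * vnorm (vsub x y)) ->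
  (* algorithm parameters *)
  (1 <= S)%N -> (1 <= K)%N -> 0 < rho ->
  (* (P1): G_0 = 1/s I >= G_1 >= ... >= G_{K-1} = G_K = 1/(s+1) I *)
  (forall s, (1 <= s <= S)%N ->
     c s 0%N = / INR s /\ c s K.-1 = / INR s.+1 /\ c s K = / INR s.+1 /\
     (forall k, (k < K)%N -> c s k.+1 <= c s k)) ->
  (* the iterates are those of Algorithm 2 with eta_s = 1/((s+1) L_F) *)
  IsRun g Jg f gf Rw A B S K rho (fun s => / (INR s.+1 * LF)) c xhat0 what0 lhat0 X W Lam Xt ->
  (* (A1): all x-points arising lie in a bounded set *)
  (exists M, forall xi s k, (s <= S)%N -> (k <= K)%N ->
     vnorm (X xi s k) <= M /\ vnorm (Xt xi s) <= M) ->
  forall s k, (1 <= s <= S)%N -> (k < K)%N ->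
  forall xi : spath n m,
  let eta := / (INR s.+1 * LF) in
  (* expectation over (i_k, j_k) uniform on [n] x [m], conditionally on the past *)
  let E := fun h : spath n m -> R =>
     / (INR n * INR m) * rsum (fun i => rsum (fun j => h (upd xi s k (i, j)))) in
  E (fun z => gnorm2 (c s k) (vsub (X z s k.+1) xs))
  <= E (fun z => gnorm2 (c s k) (vsub (X z s k) xs))
     - 2 * eta * E (fun z => Fobj g f (X z s k.+1) - Fobj g f xs)
     - 2 * eta * E (fun z => dot (vsub (sgrad g Jg gf (z s k).1 (z s k).2 (X z s k) (Xt z s.-1))
                                       (gradF g Jg gf (X z s k)))
                                 (vsub (X z s k.+1) xs))
     + 2 * eta * E (fun z => dot (tmv A (Lam z s k.+1)) (vsub xs (X z s k.+1))).
Proof.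
move=> Hn Hm _ _ _ _ HC1 HC1f Hconv _ _ _ HLF Hlip HS HK Hrho HP HRun _ s k Hs Hk xi eta E.
have Hg : forall j, has_jacobian (g j) (Jg j) by move=> j; case: (HC1 j).
have Hf : forall i, has_gradient (f i) (gf i) by move=> i; case: (HC1f i).
have [Hc0 [HcK1 [HcK Hcm]]] := HP s Hs.
have Hs1 : 0 < INR s.+1 by apply: lt_0_INR; lia.
have Heta : 0 < eta by apply: Rinv_0_lt_compat; apply: Rmult_lt_0_compat.
have Hetac : eta * LF <= c s k.
  have -> : eta * LF = / INR s.+1 by rewrite /eta; field; lra.
  rewrite -HcK1. apply: c_mono => //. lia.
have Hnm : 0 <= / (INR n * INR m).
  left; apply: Rinv_0_lt_compat; apply: Rmult_lt_0_compat; apply: lt_0_INR; lia.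
rewrite /E. apply: E_le => // i j.
set z := upd xi s k (i, j).
have [_ Hst] := HRun z.
have [_ [_ [_ [Hks _]]]] := Hst s Hs.
have Hk' := Hks k Hk. cbv zeta in Hk'.
case: Hk' => _ [Hx Hl].
rewrite Hl.
exact: (pointwise Hm Hn Hg Hf Hconv HLF Hlip xs Heta Hetac Hx).
Qed.
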